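(* Let $k \ge 2$ and $n \ge 1$ be natural numbers, and let $h_k(x) = x + \left\lfloor \frac{x}{k-1} \right\rfloor + 1$ for non-negative integers $x$, with $h_k^p$ denoting the $p$-th functional iterate of $h_k$ (so $h_k^0(0)=0$). Then there exists $p \in \mathbb{N}$ with $h_k^{p-1}(0) < n(k-1) \le h_k^{p}(0)$, and for this $p$ the last number remaining in the Josephus problem with the numbers $1,2,\dots,n$ in which every $k$-th number is removed is $nk - h_k^{p}(0)$.
   Context: Josephus problem: the numbers $1,2,\dots,n$ are arranged in a circle; starting the count at $1$ and proceeding around the circle, every $k$-th number still present is removed (after a removal, counting resumes with the next remaining number), until exactly one number remains. The claim asks to identify this remaining number. *)

(* Defs.v *)
From mathcomp Require Import all_boot.
Set Implicit Arguments. Unset Strict Implicit. Unset Printing Implicit Defensive.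

Definition hk (k x : nat) : nat := x + x %/ (k - 1) + 1.

(* One step of the Josephus process on the current circle [s] (listed in
   circular order), where counting starts at position [i] of [s]:
   the k-th element counted, at position j = (i + k - 1) mod |s|, is removed,
   and counting resumes at the element following it, which in the new list
   sits at position j (or 0 if the removed element was the last one). *)
Fixpoint jos_run (fuel k : nat) (s : seq nat) (i : nat) : seq nat :=
  match fuel with
  | 0 => s
  | f.+1 =>
      if size s <= 1 then s
      else let j := (i + k.-1) %% size s in
           jos_run f k (take j s ++ drop j.+1 s) (j %% (size s).-1)
  end.

(* The last number remaining when 1..n are placed in a circle, counting
   starts at 1 and every k-th remaining number is removed.
   n removal steps of fuel suffice (n-1 removals are needed). *)
Definition josephus (n k : nat) : nat :=
  head 0 (jos_run n k (iota 1 n) 0).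

(* Main.v *)
Require Import Defs.
From mathcomp Require Import all_boot.
From mathcomp Require Import zify.

Fixpoint J (k m : nat) : nat :=
  match m with 0 => 0 | m'.+1 => (J k m' + k) %% m'.+1 end.

Lemma J_lt k m : 0 < m -> J k m < m.
Proof. by case: m => // m _ /=; rewrite ltn_pmod. Qed.

Lemma jos_run_eq k : 0 < k -> forall f s i, (size s).-1 <= f -> 0 < size s ->
  jos_run f k s i = [:: nth 0 s ((i + J k (size s)) %% size s)].
Proof.
move=> k0; elim=> [|f IH] s i hf hs.
- have hs1 : size s = 1 by lia.
  case: s hs1 {hf hs} => [|x [|]] //= _; by rewrite modn1.
- rewrite /=; case: ifP => hsz.
  + have hs1 : size s = 1 by lia.
    case: s hs1 {hf hs hsz IH} => [|x [|]] //= _; by rewrite modn1.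
  + set m := size s.
    have [m' hm] : exists m', m = m'.+2 by exists (m - 2); lia.
    set j := (i + k.-1) %% m.
    have hj : j < m by rewrite /j ltn_pmod //; lia.
    have hsz' : size (take j s ++ drop j.+1 s) = m'.+1.
      rewrite size_cat size_take size_drop -/m hj /=; clear IH hsz hf; clearbody j m; lia.
    have h1 : (size (take j s ++ drop j.+1 s)).-1 <= f by rewrite hsz'; lia.
    have h2 : 0 < size (take j s ++ drop j.+1 s) by rewrite hsz'.
    rewrite (IH _ _ h1 h2) hsz'.
    congr [:: _].
    have -> : m.-1 = m'.+1 by rewrite hm.
    rewrite modnDml nth_cat size_take -/m hj.
    have ha : J k m'.+1 < m'.+1 by apply: J_lt.
    set a := J k m'.+1 in ha *.
    have -> : (i + J k m) %% m = (j + a + 1) %% m.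
      have hJm : J k m = (a + k) %% m by rewrite hm.
      rewrite hJm modnDmr /j -addnA modnDml; congr (_ %% _); lia.
    case: (ltnP (j + a) m'.+1) => hja.
    * rewrite (modn_small hja) ltnNge leq_addr /= nth_drop modn_small; last lia.
      congr nth; lia.
    * have -> : (j + a) %% m'.+1 = j + a - m'.+1.
        have -> : j + a = (j + a - m'.+1) + m'.+1 by lia.
        rewrite modnDr modn_small; lia.
      have -> : j + a - m'.+1 < j = true by lia.
      rewrite nth_take; last lia.
      have -> : j + a + 1 = (j + a + 1 - m) + m by lia.
      rewrite modnDr modn_small; last lia.
      congr nth; lia.
Qed.

Lemma josephus_J n k : 2 <= k -> 1 <= n -> josephus n k = (J k n).+1.
Proof.
move=> hk hn; rewrite /josephus jos_run_eq ?size_iota //; last lia; last lia.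
rewrite /= add0n modn_small ?J_lt // nth_iota ?J_lt //; lia.
Qed.

Lemma hk_gt k x : x < hk k x.
Proof. by rewrite /hk addn1 ltnS leq_addr. Qed.

Lemma iter_mono k a b : a <= b -> iter a (hk k) 0 <= iter b (hk k) 0.
Proof.
elim: b => [|b IH]; first by rewrite leqn0 => /eqP ->.
rewrite leq_eqVlt => /orP [/eqP -> //|hab].
apply: leq_trans (IH hab) _; apply: ltnW; exact: hk_gt.
Qed.

Lemma iter_small k i : i <= k - 1 -> iter i (hk k) 0 = i.
Proof.
elim: i => [//|i IH] hi /=; rewrite IH; last lia.
rewrite /hk divn_small; lia.
Qed.

Lemma hk_band k n y : 2 <= k -> n * (k - 1) <= y -> y < n.+1 * (k - 1) ->
  hk k y = y + n.+1.
Proof.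
move=> hk2 h1 h2; rewrite /hk.
have -> : y = n * (k - 1) + (y - n * (k - 1)) by lia.
rewrite divnMDl; last lia.
rewrite (divn_small (m := y - _)); lia.
Qed.

Lemma reach k n : 2 <= k -> forall d q, n.+1 * (k - 1) - iter q (hk k) 0 <= d ->
  n * (k - 1) <= iter q (hk k) 0 -> iter q (hk k) 0 < n.+1 * (k - 1) ->
  exists q' t, 0 < q' /\ iter q'.-1 (hk k) 0 < n.+1 * (k - 1) <= iter q' (hk k) 0
     /\ iter q' (hk k) 0 = iter q (hk k) 0 + t * n.+1 /\ iter q' (hk k) 0 < n.+1 * k.
Proof.
move=> hk2; elim=> [|d IH] q hd h1 h2; first lia.
have hs : iter q.+1 (hk k) 0 = iter q (hk k) 0 + n.+1 by rewrite /= (hk_band _ _ _ hk2 h1 h2).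
case: (leqP (n.+1 * (k - 1)) (iter q.+1 (hk k) 0)) => h3.
- exists q.+1, 1; split=> //; rewrite succnK h2 h3 hs; split=> //; split; lia.
- have [q' [t [hq' [hb [he hlt]]]]] := IH q.+1 ltac:(lia) ltac:(lia) h3.
  exists q', t.+1; split=> //; split=> //; rewrite he hs; split=> //; lia.
Qed.

Lemma key k n : 2 <= k -> 1 <= n -> exists p, 0 < p /\
  iter p.-1 (hk k) 0 < n * (k - 1) <= iter p (hk k) 0 /\
  iter p (hk k) 0 + J k n + 1 = n * k.
Proof.
move=> hk2; elim: n => [//|n IH] _.
case: (posnP n) => [->|hn].
- exists (k - 1); rewrite (iter_small k (k - 1)) // (iter_small k (k - 1).-1); last lia.
  rewrite /= modn1; split; first lia; split; first (apply/andP; split; lia). lia.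
- have [p [hp [/andP [hb1 hb2] he]]] := IH hn.
  have hJ := J_lt k n hn.
  set x := iter p (hk k) 0 in hb2 he.
  case: (leqP (n.+1 * (k - 1)) x) => hx.
  + exists p; split=> //; split; first by apply/andP; split=> //; lia.
    rewrite /= modn_small; lia.
  + have [q' [t [hq' [hb [hq hy]]]]] := reach k n hk2 (n.+1 * (k - 1) - x) p (leqnn _) hb2 hx.
    exists q'; split=> //; split=> //.
    move/andP: hb => [_ hb].
    set y := iter q' (hk k) 0 in hq hb hy *.
    rewrite /=.
    have -> : J k n + k = t * n.+1 + (n.+1 * k - y - 1) by lia.
    rewrite modnMDl modn_small; lia.
Qed.


Theorem theorem3 (k n : nat) (hk2 : 2 <= k) (hn : 1 <= n) :
  (exists p : nat,
      0 < p /\ iter p.-1 (hk k) 0 < n * (k - 1) <= iter p (hk k) 0) /\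
  (forall p : nat,
      0 < p -> iter p.-1 (hk k) 0 < n * (k - 1) <= iter p (hk k) 0 ->
      josephus n k = n * k - iter p (hk k) 0).
Proof.
have [p0 [hp0 [hb0 he0]]] := key k n hk2 hn.
split; first by exists p0.
move=> p hp /andP [h1 h2]; move/andP: hb0 => [h3 h4].
have -> : p = p0.
  case: (ltngtP p p0) => // c.
  - have := iter_mono k p p0.-1 ltac:(lia); lia.
  - have := iter_mono k p0 p.-1 ltac:(lia); lia.
rewrite josephus_J //; lia.
Qed.
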